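(* Let $n\ge1$, $\vec p,\vec q\in[0,1]^n$, and $N=\{1,\dots,n\}$. For nonempty $A\subseteq N$ put $\bar p_A=|A|^{-1}\sum_{i\in A}p_i$, $\bar q_A=|A|^{-1}\sum_{i\in A}q_i$, and $$\delta_A=\mathrm{TV}\big(\mathrm{Bin}(|A|,\bar p_A),\mathrm{Bin}(|A|,\bar q_A)\big).$$ If $I,J$ form a partition of $N$ with $I,J\ne\emptyset$, then $\delta_N\le2(\delta_I+\delta_J)$.
   Context: $\mathrm{Bin}(m,\theta)$ is the binomial distribution; $\mathrm{TV}(P,Q)=\frac12\sum_\omega|P(\omega)-Q(\omega)|$ is the total variation distance. *)

(* Defs.v *)
From mathcomp Require Import all_boot all_order all_algebra.
Set Implicit Arguments. Unset Strict Implicit. Unset Printing Implicit Defensive.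
Import Order.TTheory GRing.Theory Num.Theory.
Local Open Scope ring_scope.

(* Binomial pmf Bin(m, th) at k (for k <= m; zero for k > m since 'C(m,k)=0). *)
Definition binom_pmf {R : realFieldType} (m : nat) (th : R) (k : nat) : R :=
  ('C(m, k))%:R * th ^+ k * (1 - th) ^+ (m - k).

(* Total variation distance between Bin(m,a) and Bin(m,b); both are supported
   on {0,...,m}, so the sum over omega in {0..m} is the full sum. *)
Definition tv_binom {R : realFieldType} (m : nat) (a b : R) : R :=
  2^-1 * \sum_(k < m.+1) `|binom_pmf m a k - binom_pmf m b k|.

Definition avg {R : realFieldType} {n : nat} (x : 'I_n -> R) (A : {set 'I_n}) : R :=
  (#|A|%:R)^-1 * \sum_(i in A) x i.

Definition delta {R : realFieldType} {n : nat} (p q : 'I_n -> R) (A : {set 'I_n}) : R :=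
  tv_binom #|A| (avg p A) (avg q A).

(* Main.v *)
Require Import Defs.
From mathcomp Require Import all_boot all_order all_algebra.
From mathcomp Require Import ring lra.
Import Order.TTheory GRing.Theory Num.Theory.
Local Open Scope ring_scope.

Definition norm1 {R : realFieldType} (p : {poly R}) := \sum_(i < size p) `|p`_i|.

Lemma norm1E {R : realFieldType} (p : {poly R}) N :
  (size p <= N)%N -> norm1 p = \sum_(i < N) `|p`_i|.
Proof.
move=> hN; rewrite /norm1 -(subnKC hN) big_split_ord /=.
rewrite [X in _ = _ + X]big1 ?addr0 // => i _.
by rewrite nth_default ?normr0 // leq_addr.
Qed.

Lemma norm1_ge0 {R : realFieldType} (p : {poly R}) : 0 <= norm1 p.
Proof. by apply: sumr_ge0 => i _. Qed.

Lemma norm1D {R : realFieldType} (p q : {poly R}) : norm1 (p + q) <= norm1 p + norm1 q.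
Proof.
set N := maxn (size p) (size q).
rewrite (@norm1E _ (p+q) N) ?(leq_trans (size_polyD p q)) //.
rewrite (@norm1E _ p N) ?leq_maxl // (@norm1E _ q N) ?leq_maxr //.
rewrite -big_split /=; apply: ler_sum => i _; rewrite coefD; exact: ler_normD.
Qed.

Lemma norm1Z {R : realFieldType} (c : R) (p : {poly R}) : norm1 (c *: p) <= `|c| * norm1 p.
Proof.
rewrite (@norm1E _ _ (size p)) ?size_scale_leq // /norm1 mulr_sumr.
by apply: ler_sum => i _; rewrite coefZ normrM.
Qed.

Lemma norm1N {R : realFieldType} (p : {poly R}) : norm1 (- p) = norm1 p.
Proof.
by rewrite /norm1 size_polyN; apply: eq_bigr => i _; rewrite coefN normrN.
Qed.

Lemma norm1B {R : realFieldType} (p q : {poly R}) : norm1 (p - q) <= norm1 p + norm1 q.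
Proof. by rewrite -(norm1N q); exact: norm1D. Qed.

Lemma norm1C {R : realFieldType} (c : R) : norm1 c%:P = `|c|.
Proof. by rewrite (@norm1E _ _ (1)) ?size_polyC ?leq_b1 // big_ord1 coefC. Qed.

Lemma norm1_sum {R : realFieldType} (I : Type) (r : seq I) (F : I -> {poly R}) :
  norm1 (\sum_(i <- r) F i) <= \sum_(i <- r) norm1 (F i).
Proof.
elim/big_rec2: _ => [|i y1 y2 _ IH]; first by rewrite norm1C normr0.
exact: le_trans (norm1D _ _) (lerD (lexx _) IH).
Qed.

Lemma norm1XnM {R : realFieldType} (i : nat) (q : {poly R}) : norm1 ('X^i * q) = norm1 q.
Proof.
rewrite (@norm1E _ _ (i + size q)); last first.
  by apply: leq_trans (size_polyMleq _ _) _; rewrite size_polyXn addSn.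
rewrite big_split_ord /= big1 ?add0r => [|j _]; last by rewrite coefXnM ltn_ord normr0.
by rewrite /norm1; apply: eq_bigr => j _; rewrite coefXnM ltnNge leq_addr /= addKn.
Qed.

Lemma norm1M {R : realFieldType} (p q : {poly R}) : norm1 (p * q) <= norm1 p * norm1 q.
Proof.
have -> : p * q = \sum_(i < size p) p`_i *: ('X^i * q).
  rewrite -{1}[p]coefK poly_def mulr_suml; apply: eq_bigr => i _; by rewrite scalerAl.
apply: le_trans (norm1_sum _ _ _) _.
rewrite /norm1 mulr_suml; apply: ler_sum => i _.
by apply: le_trans (norm1Z _ _) _; rewrite norm1XnM.
Qed.

Definition Lp {R : realFieldType} (x : R) : {poly R} := x%:P * 'X + (1 - x)%:P.
Definition Bp {R : realFieldType} (m : nat) (x : R) : {poly R} := Lp x ^+ m.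

Lemma norm1Lp {R : realFieldType} (x : R) : 0 <= x <= 1 -> norm1 (Lp x) <= 1.
Proof.
move=> /andP[h0 h1]; apply: le_trans (norm1D _ _) _.
rewrite mul_polyC norm1C.
apply: le_trans (lerD (norm1Z _ _) (lexx _)) _.
have hX : norm1 ('X : {poly R}) = 1.
  have -> : ('X : {poly R}) = 'X^1 * 1 by rewrite expr1 mulr1.
  by rewrite norm1XnM -polyC1 norm1C normr1.
rewrite hX mulr1 !ger0_norm ?subr_ge0 //; lra.
Qed.

Lemma norm1Bp {R : realFieldType} m (x : R) : 0 <= x <= 1 -> norm1 (Bp m x) <= 1.
Proof.
move=> hx; elim: m => [|m IH]; first by rewrite /Bp expr0 -polyC1 norm1C normr1.
rewrite /Bp exprS; apply: le_trans (norm1M _ _) _.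
rewrite -[1]mulr1; apply: ler_pM => //; [exact: norm1_ge0 | exact: norm1_ge0 | exact: norm1Lp].
Qed.

Lemma size_Bp {R : realFieldType} m (x : R) : (size (Bp m x) <= m.+1)%N.
Proof.
apply: leq_trans (size_poly_exp_leq _ _) _.
have h : (size (Lp x) <= 2)%N.
  rewrite /Lp size_MXaddC; case: ifP => // _.
  by rewrite ltnS size_polyC leq_b1.
rewrite ltnS; move: h; case: (size (Lp x)) => [|[|[|s]]] //= _; by rewrite ?mul0n ?mul1n.
Qed.

Lemma conv_bound {R : realFieldType} (P1 P2 Q1 Q2 : {poly R}) :
  norm1 P2 <= 1 -> norm1 Q1 <= 1 ->
  norm1 (P1 * P2 - Q1 * Q2) <= norm1 (P1 - Q1) + norm1 (P2 - Q2).
Proof.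
move=> h2 h1.
have -> : P1 * P2 - Q1 * Q2 = (P1 - Q1) * P2 + Q1 * (P2 - Q2) by ring.
apply: le_trans (norm1D _ _) _; apply: lerD.
  apply: le_trans (norm1M _ _) _; apply: ler_piMr => //; exact: norm1_ge0.
apply: le_trans (norm1M _ _) _; rewrite mulrC; apply: ler_piMr => //; exact: norm1_ge0.
Qed.

Definition gg {R : realFieldType} (a c : R) (m : nat) := norm1 (Bp m a - Bp m c).

Lemma gg_sub {R : realFieldType} (a c : R) m1 m2 : 0 <= a <= 1 -> 0 <= c <= 1 ->
  gg a c (m1 + m2) <= gg a c m1 + gg a c m2.
Proof.
move=> ha hc; rewrite /gg /Bp !exprD; apply: conv_bound; exact: norm1Bp.
Qed.

Definition Tm {R : realFieldType} (m : nat) (D : {poly R}) : {poly R} :=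
  D + ((m.+1)%:R^-1) *: ((1 - 'X) * D^`()).

Lemma Tm_Xn {R : realFieldType} m j :
  Tm m ('X^j : {poly R}) =
  (1 - j%:R / (m.+1)%:R) *: 'X^j + (j%:R / (m.+1)%:R) *: 'X^(j.-1).
Proof.
rewrite /Tm derivXn; case: j => [|j] /=.
  by rewrite mulr0n mulr0 scaler0 addr0 !mul0r subr0 scale1r scale0r addr0.
rewrite -scaler_nat -scalerAr scalerA mulrBl mul1r -exprS.
rewrite scalerBr scalerBl scale1r [_^-1 * _]mulrC.
by rewrite addrA addrAC.
Qed.

Lemma Tm_B {R : realFieldType} m (P Q : {poly R}) : Tm m (P - Q) = Tm m P - Tm m Q.
Proof.
by rewrite /Tm derivB mulrBr scalerBr opprD addrACA.
Qed.

Lemma Tm_lin {R : realFieldType} m (D : {poly R}) :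
  Tm m D = \sum_(j < size D) D`_j *: Tm m 'X^j.
Proof.
have HD : D = \sum_(j < size D) D`_j *: 'X^j by rewrite -poly_def coefK.
rewrite [in LHS]HD /Tm linear_sum /= mulr_sumr scaler_sumr -big_split /=.
apply: eq_bigr => j _.
by rewrite derivZ -scalerAr scalerA [_^-1 * _]mulrC -scalerA scalerDr.
Qed.

Lemma Tm_Bp {R : realFieldType} m (x : R) : Tm m (Bp m.+1 x) = Bp m x.
Proof.
rewrite /Tm /Bp deriv_exp /=.
have -> : (Lp x)^`() = x%:P by rewrite /Lp derivD derivC addr0 deriv_mulC derivX mulr1.
rewrite mulrnAr -[X in _^-1 *: X]scaler_nat scalerA mulVf ?pnatr_eq0 // scale1r exprS.
move: (Lp x ^+ m) => y; rewrite /Lp polyCB polyC1; ring.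
Qed.

Lemma norm1_Tm {R : realFieldType} m (D : {poly R}) :
  (size D <= m.+2)%N -> norm1 (Tm m D) <= norm1 D.
Proof.
move=> hD; rewrite Tm_lin; apply: le_trans (norm1_sum _ _ _) _.
rewrite [X in _ <= X]/norm1; apply: ler_sum => j _.
apply: le_trans (norm1Z _ _) _; rewrite -[X in _ <= X]mulr1.
apply: ler_wpM2l => //; rewrite Tm_Xn.
have hj : (j <= m.+1)%N by rewrite -ltnS (leq_trans (ltn_ord j) hD).
set t := (_ / _ : R).
have t0 : 0 <= t by rewrite /t divr_ge0 // ler0n.
have t1 : t <= 1 by rewrite /t ler_pdivrMr ?ltr0n // mul1r ler_nat.
have hXn : forall i, norm1 ('X^i : {poly R}) = 1.
  move=> i; rewrite -['X^i]mulr1 norm1XnM -polyC1 norm1C normr1 //.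
apply: le_trans (norm1D _ _) _.
apply: le_trans (lerD (norm1Z _ _) (norm1Z _ _)) _.
rewrite !hXn !mulr1 !ger0_norm ?subr_ge0 //; lra.
Qed.

Lemma gg_mono {R : realFieldType} (a c : R) m : gg a c m <= gg a c m.+1.
Proof.
rewrite /gg -(Tm_Bp m a) -(Tm_Bp m c) -Tm_B; apply: norm1_Tm.
apply: leq_trans (size_polyD _ _) _; rewrite size_polyN geq_max !size_Bp //.
Qed.


Lemma gg_ge0 {R : realFieldType} (a c : R) m : 0 <= gg a c m.
Proof. exact: norm1_ge0. Qed.

Lemma gg_le {R : realFieldType} (a c : R) m1 m2 : (m1 <= m2)%N -> gg a c m1 <= gg a c m2.
Proof.
move/subnKC <-; elim: (m2 - m1)%N => [|d IH]; first by rewrite addn0.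
by apply: (le_trans IH); rewrite addnS gg_mono.
Qed.

Lemma gg_key {R : realFieldType} (a c : R) k K : 0 <= a <= 1 -> 0 <= c <= 1 ->
  (0 < k)%N -> k%:R * gg a c K <= (K + k)%:R * gg a c k.
Proof.
move=> ha hc hk; elim/ltn_ind: K => K IH.
have g0 := gg_ge0 a c k.
case: (leqP K k) => hKk.
  apply: (le_trans (y := k%:R * gg a c k)).
    by apply: ler_wpM2l; [rewrite ler0n | exact: gg_le].
  by apply: ler_wpM2r => //; rewrite ler_nat leq_addl.
have -> : K = ((K - k) + k)%N by rewrite subnK // ltnW.
apply: (le_trans (y := k%:R * (gg a c (K - k)%N + gg a c k))).
  by apply: ler_wpM2l; [rewrite ler0n | exact: gg_sub].
rewrite mulrDr.
have IH' := IH (K - k)%N; rewrite ltn_subrL hk /= in IH'.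
have := IH' (ltn_trans hk hKk).
rewrite natrD mulrDl => h1; lra.
Qed.

Lemma coef_Bp {R : realFieldType} m (x : R) j : (Bp m x)`_j = binom_pmf m x j.
Proof.
rewrite /Bp /Lp addrC exprDn coef_sum.
under eq_bigr => i _ do rewrite exprMn -!polyC_exp mulrA -polyCM coefMn coefCM coefXn.
rewrite /binom_pmf; case: (ltnP j m.+1) => hj.
  rewrite (bigD1 (Ordinal hj)) //= big1 ?addr0 => [|i hi].
    by rewrite eqxx mulr1; ring.
  have : (j != i) by rewrite eq_sym; apply: contra hi => /eqP h; apply/eqP/val_inj.
  by move/negbTE => ->; rewrite mulr0 mul0rn.
rewrite bin_small // !mul0r big1 // => i _.
have : (j != i) by apply: contraTneq hj => ->; rewrite -ltnNge ltn_ord.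
by move/negbTE => ->; rewrite mulr0 mul0rn.
Qed.

Lemma gg_tv {R : realFieldType} m (a c : R) : tv_binom m a c = 2^-1 * gg a c m.
Proof.
rewrite /tv_binom /gg (@norm1E _ _ m.+1); last first.
  by apply: leq_trans (size_polyD _ _) _; rewrite size_polyN geq_max !size_Bp.
by congr (_ * _); apply: eq_bigr => i _; rewrite coefB !coef_Bp.
Qed.

Lemma wsum1 {R : realFieldType} (al be : R) n : al + be = 1 ->
  \sum_(i < n.+1) 'C(n, i)%:R * al ^+ (n - i) * be ^+ i = 1.
Proof.
move=> h; transitivity ((al + be) ^+ n); last by rewrite h expr1n.
rewrite exprDn; apply: eq_bigr => i _.
by rewrite -mulrA mulr_natl.
Qed.

Lemma wmean {R : realFieldType} (al be : R) n : al + be = 1 ->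
  \sum_(i < n.+1) 'C(n, i)%:R * al ^+ (n - i) * be ^+ i * i%:R = n%:R * be.
Proof.
move=> h; case: n => [|N]; first by rewrite big_ord1 !mulr0 mul0r.
rewrite big_ord_recl /= mulr0 add0r.
transitivity ((N.+1)%:R * be * \sum_(i < N.+1) 'C(N, i)%:R * al ^+ (N - i) * be ^+ i).
  2: by rewrite wsum1 // mulr1.
rewrite mulr_sumr; apply: eq_bigr => i _.
rewrite /bump /= add1n subSS exprS.
have -> : 'C(N.+1, i.+1)%:R * al ^+ (N - i) * (be * be ^+ i) * i.+1%:R =
   ('C(N.+1, i.+1) * i.+1)%:R * al ^+ (N - i) * (be * be ^+ i) :> R.
  by rewrite natrM; ring.
rewrite mulnC -mul_bin_diag natrM /=; ring.
Qed.

Lemma Lp_mix {R : realFieldType} (al be a b : R) : al + be = 1 ->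
  Lp (al * a + be * b) = al *: Lp a + be *: Lp b.
Proof.
move=> h; have -> : be = 1 - al by rewrite -h addrC addKr.
rewrite /Lp -!mul_polyC !(rmorphB, rmorphD, rmorphM) /= polyC1; ring.
Qed.

Lemma Bp_mix {R : realFieldType} (al be a b : R) n : al + be = 1 ->
  Bp n (al * a + be * b) =
  \sum_(i < n.+1) ('C(n, i)%:R * al ^+ (n - i) * be ^+ i) *: (Bp (n - i) a * Bp i b).
Proof.
move=> h; rewrite /Bp Lp_mix // exprDn; apply: eq_bigr => i _.
rewrite !exprZn -scalerAl -scalerAr scalerA -scaler_nat scalerA; congr (_ *: _).
by rewrite mulrA.
Qed.

Lemma main_ineq {R : realFieldType} (a b c d : R) k l :
  0 <= a <= 1 -> 0 <= b <= 1 -> 0 <= c <= 1 -> 0 <= d <= 1 ->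
  (0 < k)%N -> (0 < l)%N ->
  gg ((k%:R / (k + l)%:R) * a + (l%:R / (k + l)%:R) * b)
     ((k%:R / (k + l)%:R) * c + (l%:R / (k + l)%:R) * d) (k + l)
  <= 2 * gg a c k + 2 * gg b d l.
Proof.
move=> ha hb hc hd hk hl.
set n := (k + l)%N; set al := k%:R / n%:R; set be := l%:R / n%:R.
have kR : k%:R != 0 :> R by rewrite pnatr_eq0 -lt0n.
have lR : l%:R != 0 :> R by rewrite pnatr_eq0 -lt0n.
have nR : n%:R != 0 :> R by rewrite pnatr_eq0 /n addn_eq0 negb_and -!lt0n hk.
have nkl : n%:R = k%:R + l%:R :> R by rewrite /n natrD.
have hab : al + be = 1 by rewrite /al /be -mulrDl -nkl mulfV.
have al0 : 0 <= al by rewrite /al divr_ge0 // ler0n.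
have be0 : 0 <= be by rewrite /be divr_ge0 // ler0n.
set G := gg a c k; set H := gg b d l.
have G0 : 0 <= G := gg_ge0 _ _ _.
have H0 : 0 <= H := gg_ge0 _ _ _.
set w := fun i : nat => 'C(n, i)%:R * al ^+ (n - i) * be ^+ i.
have w0 : forall i, 0 <= w i by move=> i; rewrite /w !mulr_ge0 ?exprn_ge0 ?ler0n.
rewrite /gg !Bp_mix // -sumrB.
under eq_bigr do rewrite -scalerBr.
apply: le_trans (norm1_sum _ _ _) _.
apply: (le_trans (y := \sum_(i < n.+1)
   w i * ((((n - i)%N)%:R + k%:R) / k%:R * G + (i%:R + l%:R) / l%:R * H))).
  apply: ler_sum => i _.
  apply: le_trans (norm1Z _ _) _; rewrite ger0_norm; last exact: (w0 i).
  apply: ler_wpM2l; first exact: (w0 i).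
  apply: le_trans (conv_bound _ _ _ _ (norm1Bp _ _ hb) (norm1Bp _ _ hc)) _.
  apply: lerD.
    rewrite mulrAC ler_pdivlMr ?ltr0n // mulrC -natrD; exact: gg_key.
  rewrite mulrAC ler_pdivlMr ?ltr0n // mulrC -natrD; exact: gg_key.
have hi : forall i : 'I_n.+1, ((n - i)%N)%:R = n%:R - i%:R :> R.
  by move=> i; rewrite natrB // -ltnS.
under eq_bigr => i _ do rewrite hi.
pose c1 := G / k%:R * (n%:R + k%:R); pose c2 := G / k%:R; pose c3 := H / l%:R;
pose c4 := H / l%:R * l%:R.
rewrite (eq_bigr (fun i : 'I_n.+1 => ((c1 * w i - c2 * (w i * i%:R)) + c3 * (w i * i%:R)) + c4 * w i));
  last by move=> i _; rewrite /c1 /c2 /c3 /c4; ring.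
rewrite !big_split /= ?sumrN ?sumrB -!mulr_sumr.
rewrite /w wsum1 // wmean //.
have -> : n%:R * be = l%:R by rewrite /be mulrCA mulfV ?mulr1.
rewrite /c1 /c2 /c3 /c4 nkl le_eqVlt; apply/orP; left; apply/eqP.
by field; apply/andP.
Qed.

Lemma avg01 {R : realFieldType} n (x : 'I_n -> R) (A : {set 'I_n}) :
  (forall i, 0 <= x i <= 1) -> A != set0 -> 0 <= avg x A <= 1.
Proof.
move=> hx hA; have k0 : (0 < #|A|)%N by rewrite card_gt0.
have S0 : 0 <= \sum_(i in A) x i by apply: sumr_ge0 => i _; case/andP: (hx i).
have S1 : \sum_(i in A) x i <= #|A|%:R.
  rewrite -sumr_const; apply: ler_sum => i _; by case/andP: (hx i).
rewrite /avg; apply/andP; split; first by rewrite mulr_ge0 // invr_ge0 ler0n.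
by rewrite mulrC ler_pdivrMr ?ltr0n // mul1r.
Qed.

Lemma sum_avg {R : realFieldType} n (x : 'I_n -> R) (A : {set 'I_n}) :
  A != set0 -> \sum_(i in A) x i = #|A|%:R * avg x A.
Proof.
move=> hA; have k0 : #|A|%:R != 0 :> R by rewrite pnatr_eq0 -lt0n card_gt0.
by rewrite /avg mulrA mulfV // mul1r.
Qed.

Theorem lemma4 (R : realFieldType) (n : nat) (p q : 'I_n -> R)
  (hp : forall i, 0 <= p i <= 1) (hq : forall i, 0 <= q i <= 1)
  (hn : (1 <= n)%N) (I J : {set 'I_n})
  (hIJ : [disjoint I & J]) (hcov : I :|: J = [set: 'I_n])
  (hI : I != set0) (hJ : J != set0) :
  delta p q [set: 'I_n] <= 2 * (delta p q I + delta p q J).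
Proof.
have hcard : #|[set: 'I_n]| = (#|I| + #|J|)%N.
  by rewrite -hcov -cardsUI (disjoint_setI0 hIJ) cards0 addn0.
have hk : (0 < #|I|)%N by rewrite card_gt0.
have hl : (0 < #|J|)%N by rewrite card_gt0.
have havg : forall x : 'I_n -> R, avg x [set: 'I_n] =
   (#|I|%:R / (#|I| + #|J|)%:R) * avg x I + (#|J|%:R / (#|I| + #|J|)%:R) * avg x J.
  move=> x; rewrite {1}/avg hcard -hcov.
  rewrite (eq_bigl [predU I & J]); last by move=> i; rewrite in_setU.
  rewrite bigU //= (@sum_avg _ _ x I hI) (@sum_avg _ _ x J hJ).
  have nz : (#|I| + #|J|)%:R != 0 :> R by rewrite pnatr_eq0 addn_eq0 negb_and -!lt0n hk.
  by rewrite mulrDr !mulrA ![_^-1 * _%:R]mulrC.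
rewrite /delta !gg_tv (havg p) (havg q) hcard.
have := main_ineq _ _ _ _ _ _ (avg01 _ _ _ hp hI) (avg01 _ _ _ hp hJ) (avg01 _ _ _ hq hI) (avg01 _ _ _ hq hJ) hk hl.
lra.
Qed.
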